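(* Let $d,N\ge 1$, let $V$ be a real invertible $d\times d$ matrix, let $\Lambda_{ni}\in\mathbb R$ ($n=1,\dots,N$, $i=1,\dots,d$), and set $M_n=V\,{\rm diag}(\Lambda_{n1},\dots,\Lambda_{nd})\,V^{-1}$ for $n=1,\dots,N$; let $\mathcal M_\circ=\{M_n\}_{n=1}^N$. Suppose that for every $i\neq i'$ in $\{1,\dots,d\}$ there exists $n\in\{1,\dots,N\}$ with $\Lambda_{ni}\neq\Lambda_{ni'}$. Then $\mathcal M_\circ$ admits exactly $2^d d!$ exact joint triangularizers.
   Context: All matrices are real. For a $d\times d$ matrix $A$, ${\rm low}(A)$ is its strictly lower-triangular part: $[{\rm low}(A)]_{ij}=A_{ij}$ if $i>j$ and $0$ otherwise. $\mathbb O(d)$ is the set of $d\times d$ orthogonal matrices. An exact joint triangularizer of $\mathcal M_\circ$ is a matrix $U_\circ\in\mathbb O(d)$ with ${\rm low}(U_\circ^TM_nU_\circ)=0$ for all $n=1,\dots,N$. *)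

(* Defs.v *)
From HB Require Import structures.
From mathcomp Require Import all_boot all_order all_algebra.
From mathcomp Require Import reals.
Set Implicit Arguments. Unset Strict Implicit. Unset Printing Implicit Defensive.
Import Order.TTheory GRing.Theory Num.Theory.
Local Open Scope ring_scope.

Definition low {R : pzRingType} {d : nat} (A : 'M[R]_d) : 'M[R]_d :=
  \matrix_(i < d, j < d) (if (j < i)%N then A i j else 0).

Definition orthogonal_mx {R : pzRingType} {d : nat} (U : 'M[R]_d) : Prop :=
  U^T *m U = 1%:M.

Definition joint_triangularizer {R : pzRingType} {d N : nat}
    (M : 'I_N -> 'M[R]_d) (U : 'M[R]_d) : Prop :=
  orthogonal_mx U /\ forall n : 'I_N, low (U^T *m M n *m U) = 0.

Definition diag_family {R : comUnitRingType} {d N : nat}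
    (V : 'M[R]_d) (Lambda : 'I_N -> 'I_d -> R) (n : 'I_N) : 'M[R]_d :=
  V *m diag_mx (\row_(i < d) Lambda n i) *m invmx V.

(* Main.v *)
Require Import Defs.
From HB Require Import structures.
From mathcomp Require Import all_boot all_order all_algebra all_fingroup.
From mathcomp Require Import reals.
From mathcomp Require Import ring.
Import Order.TTheory GRing.Theory Num.Theory.
Local Open Scope ring_scope.
Set Implicit Arguments. Unset Strict Implicit. Unset Printing Implicit Defensive.

Section Gen.
Variable R : fieldType.
Variable d : nat.
Implicit Types A B : 'M[R]_d.

Definition upper A := forall i j : 'I_d, (j < i)%N -> A i j = 0.

Lemma lowP A : low A = 0 <-> upper A.
Proof.
split.
  by move=> h i j lt; move/matrixP: h => /(_ i j); rewrite !mxE lt => ->.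
move=> h; rewrite /low; apply/matrixP => i j; rewrite !mxE; case: ifP => [/h -> //|_]; reflexivity.
Qed.

Lemma upper_mul A B : upper A -> upper B -> upper (A *m B).
Proof.
move=> hA hB i j lt; rewrite !mxE big1 // => k _.
case: (ltnP k i) => [ki|ik]; first by rewrite hA // mul0r.
by rewrite hB ?mulr0 // (leq_trans lt ik).
Qed.

Lemma upper_diag (x : 'rV[R]_d) : upper (diag_mx x).
Proof. by move=> i j lt; rewrite !mxE; case: eqP => [e|]; [rewrite e ltnn in lt|]. Qed.

Lemma upper_tr_trig A : upper A -> is_trig_mx A^T.
Proof. by move=> h; apply/is_trig_mxP => i j lt; rewrite mxE h. Qed.

Lemma upper_diag_ne0 A : upper A -> A \in unitmx -> forall i, A i i != 0.
Proof.
move=> hA hU i; move: hU; rewrite unitmxE -det_tr (det_trig (upper_tr_trig hA)) unitfE.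
by move/prodf_neq0 => /(_ i isT); rewrite mxE.
Qed.

Lemma upper_inv A : upper A -> A \in unitmx -> upper (invmx A).
Proof.
move=> hA hU; set C := invmx A.
have hAC : A *m C = 1%:M by rewrite mulmxV.
suff H : forall n (i j : 'I_d), (d - i <= n)%N -> (j < i)%N -> C i j = 0.
  by move=> i j; apply: (H d); rewrite leq_subr.
elim=> [|n IH] i j.
  by rewrite leqn0 subn_eq0 leqNgt ltn_ord.
move=> hn lt.
move/matrixP: hAC => /(_ i j); rewrite !mxE (bigD1 i) //= big1.
  rewrite addr0 (_ : (i == j) = false); last by apply/negbTE; rewrite neq_ltn lt orbT.
  by move/eqP; rewrite mulf_eq0 (negbTE (upper_diag_ne0 hA hU i)) /= => /eqP.
move=> k ki; case: (ltngtP k i) => [lki|lik|e]; first by rewrite hA // mul0r.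
  rewrite IH ?mulr0 //; last by rewrite (ltn_trans lt lik).
  by rewrite -ltnS (leq_trans _ hn) // ltn_sub2l.
by move/eqP: ki; case; apply/val_inj.
Qed.

Lemma perm_mxE' (s : 'S_d) i j : (perm_mx s : 'M[R]_d) i j = (s i == j)%:R.
Proof. by rewrite /perm_mx !mxE. Qed.

Lemma upper_perm_le (s : 'S_d) : upper (perm_mx s) -> forall i : 'I_d, (i <= s i)%N.
Proof.
move=> h i; rewrite leqNgt; apply/negP => /h; rewrite perm_mxE' eqxx.
by move/eqP; rewrite oner_eq0.
Qed.

Definition sgn_mx (sg : {ffun 'I_d -> bool}) : 'M[R]_d :=
  diag_mx (\row_i (if sg i then -1 else 1)).

End Gen.
Arguments sgn_mx {R d}.
Arguments upper {R d}.

Lemma upper_perm_eq1 (R : fieldType) d (s : 'S_d) :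
  upper (perm_mx s : 'M[R]_d) -> upper (perm_mx s^-1 : 'M[R]_d) -> s = 1%g.
Proof.
move=> h1 h2; apply/permP => i; rewrite perm1; apply/val_inj/eqP; rewrite eqn_leq.
rewrite (upper_perm_le h1) andbT.
by have := upper_perm_le h2 (s i); rewrite permK.
Qed.

Section RF.
Variable R : realFieldType.
Variable d : nat.
Implicit Types A B : 'M[R]_d.

Lemma m1_neq1 : (-1 : R) != 1.
Proof. by rewrite lt_eqF // (lt_trans (ltrN10 R)) // ltr01. Qed.

Lemma sgn_mx_tr (sg : {ffun 'I_d -> bool}) : (sgn_mx sg : 'M[R]_d)^T = sgn_mx sg.
Proof. exact: tr_diag_mx. Qed.

Lemma sgn_mx_sqr (sg : {ffun 'I_d -> bool}) : sgn_mx sg *m sgn_mx sg = 1%:M :> 'M[R]_d.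
Proof.
rewrite /sgn_mx mulmx_diag; apply/matrixP => i j; rewrite !mxE.
by case: (sg i); rewrite ?mulrNN mulr1 //.
Qed.

Lemma sgn_mx_inj : injective (@sgn_mx R d).
Proof.
move=> s1 s2 /matrixP h; apply/ffunP => i; move: (h i i); rewrite !mxE !eqxx !mulr1n.
case: (s1 i); case: (s2 i) => //.
  by move/eqP; rewrite (negbTE m1_neq1).
by move/eqP; rewrite eq_sym (negbTE m1_neq1).
Qed.

Lemma orth_unit A : A^T *m A = 1%:M -> A \in unitmx.
Proof. by case/mulmx1_unit. Qed.

Lemma orth_inv A : A^T *m A = 1%:M -> invmx A = A^T.
Proof.
move=> h; have hu := orth_unit h.
by rewrite -[LHS]mul1mx -h -mulmxA mulmxV // mulmx1.
Qed.

Lemma orth_tr A : A^T *m A = 1%:M -> A *m A^T = 1%:M.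
Proof. exact: mulmx1C. Qed.

Lemma orth_upper A : A^T *m A = 1%:M -> upper A ->
  exists sg : {ffun 'I_d -> bool}, A = sgn_mx sg.
Proof.
move=> h hA; have hu := orth_unit h.
have hT : upper A^T by rewrite -orth_inv //; apply: upper_inv.
exists [ffun i => A i i == -1]; apply/matrixP => i j; rewrite !mxE ffunE.
case: (ltngtP i j) => [lij|lji|eij0].
- have := hT j i lij; rewrite mxE => ->.
  by rewrite (_ : (i == j) = false) ?mulr0n //; apply/negbTE; rewrite neq_ltn lij.
- by rewrite hA // (_ : (i == j) = false) ?mulr0n //; apply/negbTE; rewrite neq_ltn lji orbT.
have eij : i = j by apply/val_inj.
subst j; rewrite eqxx mulr1n.
move/matrixP: h => /(_ i i); rewrite !mxE eqxx mulr1n (bigD1 i) //= big1.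
  rewrite addr0 !mxE -expr2 => /eqP; rewrite sqrf_eq1 => /orP[] /eqP ->.
    by rewrite eq_sym (negbTE m1_neq1).
  by rewrite eqxx.
move=> k kn; rewrite mxE.
case: (ltngtP k i) => [lki|lik|ek]; first by move: (hT i k lki); rewrite mxE => ->; rewrite mul0r.
  by rewrite hA // mul0r.
by move/eqP: kn; case; apply/val_inj.
Qed.

End RF.

Section GS.
Variable R : rcfType.
Variable d : nat.

Lemma pidE m n r (i : 'I_m) (j : 'I_n) :
  (pid_mx r : 'M[R]_(m, n)) i j = ((i == j :> nat) && (i < r)%N)%:R.
Proof. by rewrite mxE. Qed.

Lemma pid_mull m n r (A : 'M[R]_(m, n)) :
  pid_mx r *m A = \matrix_(i, j) (if (i < r)%N then A i j else 0).
Proof.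
apply/matrixP => i j; rewrite !mxE (bigD1 i) //= big1 => [|k ki].
  by rewrite addr0 pidE eqxx /=; case: ifP; rewrite ?mul1r ?mul0r.
rewrite pidE (_ : (i == k :> nat) = false) ?mul0r //.
by apply/negbTE; apply: contra ki => /eqP e; apply/eqP/val_inj.
Qed.

Lemma pid_mulr m n r (A : 'M[R]_(m, n)) :
  A *m pid_mx r = \matrix_(i, j) (if (j < r)%N then A i j else 0).
Proof.
apply: trmx_inj; rewrite trmx_mul tr_pid_mx pid_mull.
by apply/matrixP => i j; rewrite !mxE.
Qed.

Lemma pid0 : pid_mx 0 = 0 :> 'M[R]_d.
Proof. by apply/matrixP => i j; rewrite pidE andbF !mxE. Qed.

Lemma pidd : pid_mx d = 1%:M :> 'M[R]_d.
Proof. by apply/matrixP => i j; rewrite pidE ltn_ord andbT !mxE. Qed.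

Lemma pidS (k : 'I_d) :
  pid_mx k.+1 = pid_mx k + delta_mx k (0 : 'I_1) *m (delta_mx k (0 : 'I_1))^T :> 'M[R]_d.
Proof.
rewrite trmx_delta mul_delta_mx; apply/matrixP => i j; rewrite !mxE ltnS leq_eqVlt.
case: (ltngtP i k) => [ik|ki|ik].
- by rewrite orbT andbT (_ : (i == k) = false) ?addr0 //; apply/negbTE; rewrite neq_ltn ik.
- by rewrite (_ : (i == k) = false) ?addr0 //; apply/negbTE; rewrite neq_ltn ki orbT.
- have e : i = k by apply/val_inj.
  subst i; rewrite eqxx /= andbF add0r andbT; case: (eqVneq k j) => [->|kj]; first by rewrite !eqxx.
  rewrite (_ : (k == j :> nat) = false); last first.
    by apply/negbTE; apply: contra kj => /eqP e; apply/eqP/val_inj.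
  by [].
Qed.

Lemma rv_norm_gt0 (u : 'rV[R]_d) : u != 0 -> 0 < (u *m u^T) 0 0.
Proof.
move=> une0.
have hs : (u *m u^T) 0 0 = \sum_j u 0 j ^+ 2.
  by rewrite mxE; apply: eq_bigr => j _; rewrite mxE expr2.
rewrite hs lt_def sumr_ge0 ?andbT; last by move=> j _; rewrite sqr_ge0.
case/matrix0Pn: une0 => i [j wij]; rewrite ord1 in wij.
apply/negP => /eqP /psumr_eq0P h; move: (h (fun j _ => sqr_ge0 (u 0 j)) j isT).
by move/eqP; rewrite sqrf_eq0 (negbTE wij).
Qed.

Lemma trig_step (L : 'M[R]_d) (k : 'I_d) (c : 'rV[R]_d) a :
  is_trig_mx L -> c *m (pid_mx k : 'M[R]_d) = c ->
  is_trig_mx (L + delta_mx k (0 : 'I_1) *m c + a *: (delta_mx k (0 : 'I_1) *m (delta_mx k (0 : 'I_1))^T)).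
Proof.
move=> /is_trig_mxP hL hc; apply/is_trig_mxP => i j lt.
rewrite trmx_delta mul_delta_mx !mxE big_ord1 !mxE hL // add0r.
case: (eqVneq i k) => [eik|nik]; last by rewrite /= !mul0r mulr0 addr0.
subst i; rewrite -hc pid_mulr mxE ltnNge (ltnW lt) /= mulr0 add0r.
by rewrite (_ : (j == k) = false) ?andbF ?mulr0 //; apply/negbTE; rewrite neq_ltn lt orbT.
Qed.

Lemma GS_step (X : 'M[R]_d) (k : 'I_d) (O L : 'M[R]_d) :
  X \in unitmx ->
  O *m O^T = pid_mx k -> pid_mx k *m O = O -> pid_mx k *m L = L ->
  is_trig_mx L -> pid_mx k *m X = L *m O ->
  exists O' L' : 'M[R]_d, [/\ O' *m O'^T = pid_mx k.+1, pid_mx k.+1 *m O' = O',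
    pid_mx k.+1 *m L' = L', is_trig_mx L' & pid_mx k.+1 *m X = L' *m O'].
Proof.
move=> hX hOO hpO hpL hL hXk.
set e : 'M[R]_(d, 1) := delta_mx k 0.
set x : 'rV[R]_d := e^T *m X.
set c : 'rV[R]_d := x *m O^T.
set w : 'rV[R]_d := x - c *m O.
have eTe : e^T *m e = 1%:M.
  by rewrite /e trmx_delta mul_delta_mx; apply/rowP => i; rewrite !ord1 !mxE.
have eTpid : e^T *m (pid_mx k : 'M[R]_d) = 0.
  rewrite pid_mulr; apply/rowP => j; rewrite !mxE; case: ifP => // jk.
  by rewrite (_ : (j == k) = false) //; apply/negbTE; rewrite neq_ltn jk.
have eTO : e^T *m O = 0 by rewrite -hpO mulmxA eTpid mul0mx.
have cpid : c *m (pid_mx k : 'M[R]_d) = c.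
  by rewrite /c -mulmxA -tr_pid_mx -trmx_mul hpO.
have wO : w *m O^T = 0.
  by rewrite /w mulmxBl -[c *m O *m _]mulmxA hOO cpid subrr.
have Le : L *m e = 0.
  apply/matrixP => i j; rewrite !mxE big1 // => l _; rewrite !mxE.
  case: (eqVneq l k) => [->|lk]; last by rewrite /= mulr0.
  case: (ltnP i k) => ik; first by move/is_trig_mxP: hL => ->; rewrite ?mul0r.
  by rewrite -hpL pid_mull mxE ltnNge ik /= mul0r.
have ce : c *m e = 0.
  by rewrite /c -mulmxA -[e]trmxK -trmx_mul eTO trmx0 mulmx0.
have wne0 : w != 0.
  apply/negP => /eqP w0.
  have xc : x = c *m O by apply/eqP; rewrite -subr_eq0 -/w w0.
  have E : pid_mx k.+1 *m X = (L + e *m c) *m pid_mx k *m O.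
    rewrite pidS mulmxDl hXk -mulmxA -/x xc -!mulmxA hpO.
    by rewrite mulmxDl !mulmxA.
  have := mxrankM_maxl ((L + e *m c) *m pid_mx k) O.
  rewrite -E mxrankMfree ?row_free_unit // rank_pid_mx // ?ltn_ord // => H.
  have := leq_trans H (mxrankM_maxr _ _).
  by rewrite rank_pid_mx ?ltnn //; exact: (ltnW (ltn_ord k)).
set s := (w *m w^T) 0 0.
have s_gt0 : 0 < s by apply: rv_norm_gt0.
set n := Num.sqrt s.
have n_gt0 : 0 < n by rewrite sqrtr_gt0.
have nne0 : n != 0 by rewrite gt_eqF.
set o : 'rV[R]_d := n^-1 *: w.
have oO : o *m O^T = 0 by rewrite /o -scalemxAl wO scaler0.
have ooT : o *m o^T = 1%:M.
  have ws : w *m w^T = s%:M by apply/rowP => i; rewrite ord1 [in RHS]mxE eqxx mulr1n.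
  rewrite /o linearZ /= -scalemxAl -scalemxAr ws !scale_scalar_mx.
  by rewrite mulrA -invfM -expr2 sqr_sqrtr ?ltW // mulVf // gt_eqF.
have pe : (pid_mx k : 'M[R]_d) *m e = 0.
  by rewrite -[e]trmxK -tr_pid_mx -trmx_mul eTpid trmx0.
have eTL : e^T *m L = 0 by rewrite -hpL mulmxA eTpid mul0mx.
exists (O + e *m o), (L + e *m c + n *: (e *m e^T)); split.
- have Oo : O *m o^T = 0 by rewrite -[O]trmxK -trmx_mul oO trmx0.
  rewrite linearD /= trmx_mul !mulmxDl !mulmxDr hOO pidS mulmxA Oo mul0mx addr0.
  rewrite -[e *m o *m O^T]mulmxA oO mulmx0 add0r.
  by rewrite -[e *m o *m _]mulmxA [o *m _]mulmxA ooT mul1mx.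
  rewrite pidS -/e mulmxDl !mulmxDr hpO mulmxA pe mul0mx addr0.
  rewrite -[e *m e^T *m O]mulmxA eTO mulmx0 add0r.
  by rewrite -[e *m e^T *m _]mulmxA [e^T *m _]mulmxA eTe mul1mx.
- rewrite pidS -/e mulmxDl !mulmxDr hpL -scalemxAr !mulmxA pe !mul0mx scaler0 !addr0.
  rewrite -!(mulmxA e e^T) eTL mulmx0 add0r eTe mulmx1.
  rewrite -[e^T *m (n *: _)]scalemxAr [e^T *m (e *m _)]mulmxA eTe mul1mx.
  by rewrite -scalemxAr !mulmxA addrA.
- exact: trig_step.
- rewrite pidS -/e mulmxDl hXk !mulmxDr !mulmxDl.
  rewrite [L *m (e *m o)]mulmxA Le mul0mx add0r.
  rewrite -[e *m c *m (e *m o)]mulmxA [c *m (e *m o)]mulmxA ce mul0mx mulmx0 add0r.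
  rewrite -!scalemxAl -[e *m e^T *m O]mulmxA eTO mulmx0 scaler0 addr0.
  rewrite -[e *m e^T *m (e *m o)]mulmxA [e^T *m (e *m o)]mulmxA eTe mul1mx.
  rewrite -addrA; congr (_ + _).
  rewrite scalemxAr /o scalerA mulfV // scale1r /w -mulmxA -/x.
  by rewrite -mulmxA -mulmxDr addrC subrK.
Qed.

Lemma GS_all (X : 'M[R]_d) : X \in unitmx -> forall k, (k <= d)%N ->
  exists O L : 'M[R]_d, [/\ O *m O^T = pid_mx k, pid_mx k *m O = O,
    pid_mx k *m L = L, is_trig_mx L & pid_mx k *m X = L *m O].
Proof.
move=> hX; elim=> [|k IH] hk.
  exists 0, 0; rewrite pid0 !mul0mx ?mulmx0; split => //; exact: mx0_is_trig.
have [O [L [h1 h2 h3 h4 h5]]] := IH (ltnW hk).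
exact: (@GS_step X (Ordinal hk) O L).
Qed.

Lemma QR (A : 'M[R]_d) : A \in unitmx ->
  exists Q B : 'M[R]_d, [/\ Q^T *m Q = 1%:M, upper B & A = Q *m B].
Proof.
move=> hA; have hX : A^T \in unitmx by rewrite unitmx_tr.
have [O [L [h1 _ _ h4 h5]]] := GS_all hX (leqnn d).
exists O^T, L^T; split.
- by rewrite trmxK h1 pidd.
- by move=> i j lt; rewrite mxE; move/is_trig_mxP: h4 => ->.
- by rewrite -trmx_mul -h5 pidd mul1mx trmxK.
Qed.
End GS.

Section Main.
Variable R : rcfType.
Variables d N : nat.
Variable V : 'M[R]_d.
Hypothesis hV : V \in unitmx.
Variable Lambda : 'I_N -> 'I_d -> R.
Hypothesis hsep : forall i i' : 'I_d, i != i' -> exists n : 'I_N, Lambda n i != Lambda n i'.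

Definition Dg (n : 'I_N) : 'M[R]_d := diag_mx (\row_(i < d) Lambda n i).

Definition good (s : 'S_d) (U : 'M[R]_d) :=
  U^T *m U = 1%:M /\ upper (perm_mx s^-1 *m invmx V *m U).

Lemma perm_mxMV (s : 'S_d) : perm_mx s *m perm_mx s^-1 = 1%:M :> 'M[R]_d.
Proof. by rewrite -perm_mxM mulgV perm_mx1. Qed.

Lemma perm_mxVM (s : 'S_d) : perm_mx s^-1 *m perm_mx s = 1%:M :> 'M[R]_d.
Proof. by rewrite -perm_mxM mulVg perm_mx1. Qed.

Lemma perm_unit (s : 'S_d) : (perm_mx s : 'M[R]_d) \in unitmx.
Proof. by case: (mulmx1_unit (perm_mxMV s)). Qed.

Lemma perm_mul_entry (s : 'S_d) (A : 'M[R]_d) i j :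
  (perm_mx s *m A) i j = A (s i) j.
Proof. by rewrite -row_permE mxE. Qed.

Lemma mul_perm_entry (s : 'S_d) (A : 'M[R]_d) i j :
  (A *m perm_mx s) i j = A i ((s^-1)%g j).
Proof. by have := col_permE (s^-1)%g A; rewrite invgK => <-; rewrite mxE. Qed.

Lemma upper_Dconj (s : 'S_d) n : upper (perm_mx s^-1 *m Dg n *m perm_mx s).
Proof.
move=> i j lt; rewrite mul_perm_entry perm_mul_entry !mxE.
rewrite (_ : ((s^-1)%g i == (s^-1)%g j) = false) ?mulr0n //.
by rewrite (inj_eq perm_inj); apply/negbTE; rewrite neq_ltn lt orbT.
Qed.

Lemma char_rev s U : good s U -> joint_triangularizer (diag_family V Lambda) U.
Proof.
case=> hU hB; split => // n; apply/lowP.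
set B := perm_mx s^-1 *m invmx V *m U.
have hUu := orth_unit hU.
have hBu : B \in unitmx by rewrite !unitmx_mul perm_unit unitmx_inv hV hUu.
set T := U^T *m diag_family V Lambda n *m U.
have BT : B *m T = (perm_mx s^-1 *m Dg n *m perm_mx s) *m B.
  rewrite /B /T /diag_family -!mulmxA (mulmxA U) (orth_tr hU) mul1mx.
  rewrite (mulmxA (invmx V)) mulVmx // mul1mx.
  rewrite !mulmxA -[perm_mx s^-1 *m Dg n *m perm_mx s *m perm_mx s^-1]mulmxA perm_mxMV mulmx1.
  by rewrite /Dg.
have -> : T = invmx B *m ((perm_mx s^-1 *m Dg n *m perm_mx s) *m B).
  by rewrite -BT mulKmx.
rewrite mulmxA; apply: upper_mul => //; apply: upper_mul; last exact: upper_Dconj.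
exact: upper_inv.
Qed.

Lemma good_exists s : exists Q, good s Q.
Proof.
have hA : V *m perm_mx s \in unitmx by rewrite unitmx_mul hV perm_unit.
have [Q [B [hQ hB hAQ]]] := QR hA.
have hBu : B \in unitmx by move: hA; rewrite hAQ unitmx_mul => /andP[].
exists Q; split => //.
have -> : Q = V *m perm_mx s *m invmx B by rewrite hAQ mulmxK.
rewrite !mulmxA -[perm_mx s^-1 *m invmx V *m V]mulmxA mulVmx // mulmx1 perm_mxVM mul1mx.
exact: upper_inv.
Qed.

Lemma good_uniq s Q U : good s Q ->
  (good s U <-> exists sg : {ffun 'I_d -> bool}, U = Q *m sgn_mx sg).
Proof.
case=> hQ hB1; have hQu := orth_unit hQ.
set G := perm_mx s^-1 *m invmx V.
have hGu : G \in unitmx by rewrite unitmx_mul perm_unit unitmx_inv hV.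
split; last first.
  case=> sg ->; split.
    by rewrite trmx_mul mulmxA -[_ *m Q^T *m Q]mulmxA hQ mulmx1 sgn_mx_tr sgn_mx_sqr.
  by rewrite mulmxA; apply: upper_mul => //; apply: upper_diag.
case=> hU hB2.
have hB1u : G *m Q \in unitmx by rewrite unitmx_mul hGu hQu.
set O := Q^T *m U.
have E : (G *m Q) *m O = G *m U by rewrite /O -mulmxA (mulmxA Q) (orth_tr hQ) mul1mx.
have hO : upper O.
  have -> : O = invmx (G *m Q) *m (G *m U) by rewrite -E mulKmx.
  by apply: upper_mul => //; apply: upper_inv.
have hOO : O^T *m O = 1%:M.
  by rewrite /O trmx_mul trmxK mulmxA -[U^T *m Q *m Q^T]mulmxA (orth_tr hQ) mulmx1.
have [sg Osg] := orth_upper hOO hO.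
exists sg; rewrite -Osg /O mulmxA (orth_tr hQ) mul1mx //.
Qed.

Lemma good_disj s t U : good s U -> good t U -> s = t.
Proof.
case=> hU hB1 [_ hB2]; have hUu := orth_unit hU.
set P := invmx V *m U.
have hPu : P \in unitmx by rewrite unitmx_mul unitmx_inv hV.
have hB1u : perm_mx s^-1 *m P \in unitmx by rewrite unitmx_mul perm_unit.
have hB2u : perm_mx t^-1 *m P \in unitmx by rewrite unitmx_mul perm_unit.
rewrite -!mulmxA -/P in hB1 hB2.
have key : forall a b : 'S_d, upper (perm_mx a^-1 *m P) -> upper (perm_mx b^-1 *m P) ->
    perm_mx a^-1 *m P \in unitmx -> upper (perm_mx (b^-1 * a)%g : 'M[R]_d).
  move=> a b ha hb hau.
  have -> : perm_mx (b^-1 * a)%g = (perm_mx b^-1 *m P) *m invmx (perm_mx a^-1 *m P) :> 'M[R]_d.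
    apply: (canRL (mulmxK hau)).
    by rewrite perm_mxM -mulmxA (mulmxA (perm_mx a)) perm_mxMV mul1mx.
  by apply: upper_mul => //; apply: upper_inv.
have h : (t^-1 * s = 1)%g.
  apply: upper_perm_eq1; first exact: key.
  by rewrite invMg invgK; exact: key.
by move/(congr1 (mulg t)): h; rewrite mulKVg mulg1.
Qed.

Lemma KL (m : nat) (Wm : 'M[R]_(m, d)) (u : 'rV[R]_d) (i : 'I_d) :
  (forall n, (Wm *m Dg n <= Wm)%MS) -> (u <= Wm)%MS -> u 0 i != 0 ->
  ((delta_mx 0 i : 'rV[R]_d) <= Wm)%MS.
Proof.
move=> hW hu hui.
have step : forall s : seq 'I_d, i \notin s -> exists x : 'rV[R]_d,
    [/\ x 0 i != 0, (forall j, j \in s -> x 0 j = 0) & (u *m diag_mx x <= Wm)%MS].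
  elim=> [|j s IH] hs.
    exists (\row_l 1); split; first by rewrite mxE oner_eq0.
      by [].
    have -> : u *m diag_mx (\row_l 1) = u.
      by apply/matrixP => a b; rewrite mul_mx_diag !mxE mulr1.
    exact: hu.
  move: hs; rewrite inE negb_or => /andP [hij his].
  have [x [hx0 hxs hxW]] := IH his.
  have [n hn] := hsep hij.
  exists (\row_l (x 0 l * (Lambda n l - Lambda n j))); split.
  - by rewrite mxE mulf_neq0 // subr_eq0.
  - move=> l; rewrite inE => /orP [/eqP ->|hl]; rewrite mxE ?subrr ?mulr0 //.
    by rewrite hxs // mul0r.
  - have -> : u *m diag_mx (\row_l (x 0 l * (Lambda n l - Lambda n j))) =
        (u *m diag_mx x) *m Dg n + (- Lambda n j) *: (u *m diag_mx x).
      apply/matrixP => a b; rewrite /Dg !mul_mx_diag !mxE; ring.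
    apply: addmx_sub; last exact: scalemx_sub.
    exact: submx_trans (submxMr _ hxW) (hW n).
have hni : i \notin [seq j <- enum 'I_d | j != i] by rewrite mem_filter eqxx.
have [x [hx0 hxs hxW]] := step _ hni.
have E : u *m diag_mx x = (u 0 i * x 0 i) *: delta_mx 0 i.
  apply/matrixP => a b; rewrite ord1 mul_mx_diag !mxE eqxx /=.
  case: (eqVneq b i) => [->|hb]; first by rewrite mulr1.
  by rewrite hxs ?mulr0 // mem_filter hb mem_enum.
have nz : u 0 i * x 0 i != 0 by rewrite mulf_neq0.
rewrite -(scale1r (delta_mx 0 i)) -(mulVf nz) -scalerA -E.
exact: scalemx_sub.
Qed.

Lemma pid_trig (k : nat) (T : 'M[R]_d) : upper T ->
  (pid_mx k : 'M[R]_d) *m T^T = pid_mx k *m T^T *m pid_mx k.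
Proof.
move=> hT; rewrite pid_mulr !pid_mull; apply/matrixP => i j; rewrite !mxE.
case: ifP => // ik; case: ifP => // jk.
rewrite hT //; apply: (leq_trans ik); by rewrite leqNgt jk.
Qed.

Lemma pid_row_entry (k : nat) (A : 'M[R]_d) (j i : 'I_d) :
  (row j ((pid_mx k : 'M[R]_d) *m A)) 0 i = if (j < k)%N then A j i else 0.
Proof. by rewrite pid_mull !mxE. Qed.

Lemma char_fwd (hd : (0 < d)%N) U :
  joint_triangularizer (diag_family V Lambda) U -> exists s, good s U.
Proof.
case=> hU hT.
have hUu := orth_unit hU.
set P := invmx V *m U.
have hPu : P \in unitmx by rewrite unitmx_mul unitmx_inv hV.
set Q := P^T.
have hQu : Q \in unitmx by rewrite unitmx_tr.
set T := fun n => U^T *m diag_family V Lambda n *m U.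
have hTu : forall n, upper (T n) by move=> n; apply/lowP; exact: hT.
have PT : forall n, P *m T n = Dg n *m P.
  move=> n; rewrite /P /T /diag_family -!mulmxA (mulmxA U) (orth_tr hU) mul1mx.
  by rewrite (mulmxA (invmx V)) mulVmx // mul1mx.
have QD : forall n, Q *m Dg n = (T n)^T *m Q.
  by move=> n; rewrite /Q -{1}[Dg n]tr_diag_mx -trmx_mul -PT trmx_mul.
set W := fun k : nat => (pid_mx k : 'M[R]_d) *m Q.
have inv : forall k n, (W k *m Dg n <= W k)%MS.
  move=> k n; rewrite /W -mulmxA QD mulmxA pid_trig // -mulmxA.
  exact: submxMl.
set S := fun k : nat => [set i : 'I_d | [exists j : 'I_d, (j < k)%N && (Q j i != 0)]].
have rkW : forall k, (k <= d)%N -> \rank (W k) = k.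
  by move=> k hk; rewrite /W mxrankMfree ?row_free_unit // rank_pid_mx.
have rkS : forall k, \rank (W k) = #|S k|.
  move=> k.
  have sub1 : ((\sum_(i in S k) <<delta_mx 0 i : 'rV[R]_d>>)%MS <= W k)%MS.
    apply/sumsmx_subP => i; rewrite inE => /existsP [j /andP [jk qji]].
    rewrite genmxE; apply: (KL (inv k) (row_sub j (W k))).
    by rewrite /W pid_row_entry jk.
  have sub2 : (W k <= (\sum_(i in S k) <<delta_mx 0 i : 'rV[R]_d>>)%MS)%MS.
    apply/row_subP => r; rewrite [row r _]row_sum_delta.
    apply: summx_sub => i _.
    case: (boolP (i \in S k)) => hi.
      apply: scalemx_sub; apply: (sumsmx_sup i) => //; rewrite genmxE; exact: submx_refl.
    rewrite (_ : row r (W k) 0 i = 0) ?scale0r ?sub0mx //.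
    rewrite /W pid_row_entry; case: ifP => // rk.
    apply/eqP; move: hi; rewrite inE negb_exists => /forallP /(_ r).
    by rewrite rk /= negbK.
  have := mxdirect_delta R (P := mem (S k)) (n := d) (f := id) (fun _ _ _ _ => id).
  move/mxdirectP => /= hr.
  have hc : \rank (\sum_(i in S k) <<delta_mx 0 i : 'rV[R]_d>>)%MS = #|S k|.
    rewrite hr (eq_bigr (fun _ => 1%N)); first by rewrite sum1_card.
    by move=> i _; rewrite mxrank_gen mxrank_delta.
  by apply/eqP; rewrite -hc eqn_leq (mxrankS sub1) (mxrankS sub2).
have cardS : forall k, (k <= d)%N -> #|S k| = k by move=> k hk; rewrite -rkS rkW.
have S0 : S 0%N = set0.
  by apply/setP => i; rewrite !inE; apply/negbTE; rewrite negb_exists; apply/forallP.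
have Smono : forall k, S k \subset S k.+1.
  move=> k; apply/subsetP => i; rewrite !inE => /existsP [j /andP [jk q]].
  by apply/existsP; exists j; rewrite ltnS (ltnW jk) q.
have Sd : forall i, i \in S d.
  move=> i; have : S d == setT.
    by rewrite eqEcard subsetT /= cardsT card_ord cardS.
  by move/eqP ->; rewrite inE.
have exi : forall i, exists m, i \in S m.+1 by move=> i; exists d.-1; rewrite prednK.
pose F i := ex_minn (exi i).
have FP1 : forall i, i \in S (F i).+1 by move=> i; rewrite /F; case: ex_minnP.
have FP2 : forall i m, i \in S m.+1 -> (F i <= m)%N.
  by move=> i m h; rewrite /F; case: ex_minnP => x _ H; apply: H.
have Flt : forall i, (F i < d)%N.
  by move=> i; rewrite -(prednK hd) ltnS FP2 // prednK.
have Fnot : forall i, i \notin S (F i).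
  move=> i; case e : (F i) => [|m]; first by rewrite S0 inE.
  by apply/negP => /FP2; rewrite e ltnn.
have Finj : injective (fun i => Ordinal (Flt i)).
  move=> i i' /(congr1 val) /= e.
  have hm : ((F i).+1 <= d)%N := Flt i.
  have c1 : #|S (F i).+1 :\: S (F i)| = 1%N.
    by rewrite cardsD (setIidPr (Smono (F i))) !cardS // ?(ltnW hm) // subSnn.
  have /cards1P [x hx] : #|S (F i).+1 :\: S (F i)| == 1%N by rewrite c1.
  have hi : i \in S (F i).+1 :\: S (F i) by rewrite inE Fnot FP1.
  have hi' : i' \in S (F i).+1 :\: S (F i) by rewrite e inE Fnot FP1.
  by move: hi hi'; rewrite hx !inE => /eqP -> /eqP ->.
exists (perm Finj); split => // a b lt.
rewrite -mulmxA perm_mul_entry.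
set i := ((perm Finj)^-1)%g a.
have ai : a = perm Finj i by rewrite /i permKV.
rewrite ai permE /= in lt.
apply/eqP; apply/negPn/negP => h.
have : i \in S b.+1.
  by rewrite inE; apply/existsP; exists b; rewrite ltnSn /Q mxE h.
by move/FP2; rewrite leqNgt lt.
Qed.

End Main.

Unset Implicit Arguments.

Theorem lemma1 (R : realType) (d N : nat) (hd : (0 < d)%N) (hN : (0 < N)%N)
    (V : 'M[R]_d) (hV : V \in unitmx) (Lambda : 'I_N -> 'I_d -> R)
    (hsep : forall i i' : 'I_d, i != i' -> exists n : 'I_N, Lambda n i != Lambda n i') :
  exists s : seq 'M[R]_d,
    [/\ uniq s, size s = (2 ^ d * d`!)%N &
        forall U : 'M[R]_d, joint_triangularizer (diag_family V Lambda) U <-> U \in s].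
Proof.
have [Qf hQf] := fin_all_exists (good_exists hV).
pose F (p : {perm 'I_d} * {ffun 'I_d -> bool}) := Qf p.1 *m sgn_mx p.2.
have goodF : forall p, good V p.1 (F p).
  by move=> [s sg]; apply/(good_uniq hV _ (hQf s)); exists sg.
have Finj : injective F.
  move=> [s sg] [t tg] e.
  have est : s = t by apply: (good_disj hV (goodF (s, sg))); rewrite e; exact: (goodF (t, tg)).
  subst t; congr (_, _); apply: (@sgn_mx_inj R).
  have hu := orth_unit (hQf s).1.
  by move: e; rewrite /F /= => /(congr1 (mulmx (invmx (Qf s)))); rewrite !mulKmx.
exists [seq F p | p <- enum {: {perm 'I_d} * {ffun 'I_d -> bool}}]; split.
- by rewrite map_inj_uniq // enum_uniq.
- by rewrite size_map -cardE card_prod card_Sn card_ffun card_bool card_ord mulnC.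
move=> U; split.
  move/(char_fwd hV hsep hd) => [s hs].
  have [sg ->] := (good_uniq hV _ (hQf s)).1 hs.
  by apply/mapP; exists (s, sg); rewrite ?mem_enum.
by case/mapP => p _ ->; apply: (char_rev hV Lambda (goodF p)).
Qed.
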